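(* Fix $\varepsilon>0$ and $C>0$. There are constants $c_1,c_2>0$ (depending on $\varepsilon$ and $C$) and $n_0$ such that for all $n\ge n_0$ and all integers $2\le k\le Cn^{1/2-\varepsilon}$ there exist a length $m$ and a sequence $S\in[n]^m$ with $\mathit{WS}(S)\le c_1 m\log_2 k$ and ${\mathit LF}^k(S)\ge c_2 m\log_2(n/k)$.
   Context: Working set bound: for $S=(s_1,\dots,s_m)$ and $j\le m$, let $\rho(j)=\max\{i<j:s_i=s_j\}$, with $\rho(j)=0$ if there is no such $i$, and let $w_S(j)=\{s_i:\rho(j)<i\le j\}$. Then $\mathit{WS}(S)=\sum_{j=1}^m\log_2|w_S(j)|$. For a BST $T$, $d_T(a,b)$ is the number of edges on the path between $a$ and $b$. $k$-lazy finger bound: for a BST $T$ on $[n]$, a finger strategy consists of initial positions $\vec\ell\in[n]^k$ and assignments $\vec f\in[k]^m$, where finger $f_t$ serves $s_t$ and then sits at $s_t$. The cost is $\sum_t(1+d_T(s_t,\sigma(f_t,t)))$, where $\sigma(i,t)$ is the position of finger $i$ just before time $t$. ${\mathit LF}^k_T(S)$ is the minimum over strategies, and ${\mathit LF}^k(S)=\min_T{\mathit LF}^k_T(S)$ over BSTs $T$ on $[n]$. *)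

(* Defs.v *)
From mathcomp Require Import all_boot.
From Stdlib Require Import Reals.

Set Implicit Arguments.
Unset Strict Implicit.
Unset Printing Implicit Defensive.

Definition in_range (n : nat) (x : nat) : bool := (1 <= x <= n)%N.

Definition log2 (x : R) : R := (ln x / ln 2)%R.

(* Working set bound.  Positions are 0-indexed: S = s_0 ... s_{m-1}.   *)
(* For position j, the previous occurrence of s_j (if any) is the last *)
(* i < j with s_i = s_j; the window w_S(j) is the set of keys s_i with  *)
(* prev < i <= j (all i <= j if there is no previous occurrence).       *)

Definition ws_start (S : seq nat) (j : nat) : nat :=
  let pre := take j S in
  let x := nth 0%N S j in
  if x \in pre then (size pre - index x (rev pre))%N   (* = last occurrence + 1 *)
  else 0%N.

Definition ws_window (S : seq nat) (j : nat) : seq nat :=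
  undup (drop (ws_start S j) (take j.+1 S)).

Definition WS (S : seq nat) : R :=
  foldr Rplus 0%R
    (map (fun j => log2 (INR (size (ws_window S j)))) (iota 0 (size S))).

Inductive tree : Type :=
| Leaf : tree
| Node : tree -> nat -> tree -> tree.

Fixpoint inorder (t : tree) : seq nat :=
  match t with
  | Leaf => [::]
  | Node l x r => inorder l ++ x :: inorder r
  end.

(* A BST on [n]: a binary tree whose in-order key sequence is 1,2,...,n
   (so the keys are exactly [n], each once, in search-tree order). *)
Definition bst_on (n : nat) (t : tree) : Prop := inorder t = iota 1 n.

Fixpoint root_path (t : tree) (a : nat) : seq nat :=
  match t with
  | Leaf => [::]
  | Node l x r =>
      if a == x then [:: x]
      else if a \in inorder l then x :: root_path l a
      else if a \in inorder r then x :: root_path r a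
      else [::]
  end.

Fixpoint lcp (s u : seq nat) : nat :=
  match s, u with
  | x :: s', y :: u' => if x == y then (lcp s' u').+1 else 0%N
  | _, _ => 0%N
  end.

(* d_T(a,b): number of edges on the tree path between a and b
   = depth a + depth b - 2 depth(lca a b). *)
Definition dist (t : tree) (a b : nat) : nat :=
  (size (root_path t a) + size (root_path t b) - 2 * lcp (root_path t a) (root_path t b))%N.

(* k-lazy finger bound.  Fingers are 0..k-1; times are 0..m-1.          *)
(* l i  = initial position of finger i;  f t = finger serving s_t.      *)

(* sigma(i,t): position of finger i just before time t *)
Fixpoint finger_pos (S : seq nat) (f : nat -> nat) (l : nat -> nat)
    (i : nat) (t : nat) : nat :=
  match t with
  | 0 => l i
  | t'.+1 => if f t' == i then nth 0%N S t' else finger_pos S f l i t'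
  end.

Definition finger_cost (t : tree) (S : seq nat) (f l : nat -> nat) : nat :=
  (\sum_(0 <= u < size S) (1 + dist t (nth 0%N S u) (finger_pos S f l (f u) u)))%N.

Definition valid_strategy (n k : nat) (S : seq nat) (f l : nat -> nat) : Prop :=
  (forall i, (i < k)%N -> in_range n (l i)) /\
  (forall u, (u < size S)%N -> (f u < k)%N).

(* "LF^k(S) >= x", where LF^k(S) = min over BSTs T on [n] and over finger
   strategies of the cost; stated by unfolding the minimum:
   every BST and every strategy costs at least x. *)
Definition LF_ge (n k : nat) (S : seq nat) (x : R) : Prop :=
  forall (t : tree) (f l : nat -> nat),
    bst_on n t -> valid_strategy n k S f l -> (x <= INR (finger_cost t S f l))%R.

(* Main.v *)
Require Import Defs.
From mathcomp Require Import all_boot.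
From Stdlib Require Import Reals.
From mathcomp Require Import zify.
From Stdlib Require Import Lra.

Set Implicit Arguments.
Unset Strict Implicit.
Unset Printing Implicit Defensive.

Notation tdist := Defs.dist.

Fixpoint bp (t : tree) (a : nat) : seq bool :=
  match t with
  | Leaf => [::]
  | Node l x r =>
      if a == x then [::]
      else if a \in inorder l then false :: bp l a
      else if a \in inorder r then true :: bp r a
      else [::]
  end.

Fixpoint nav (t : tree) (w : seq bool) : nat :=
  match t with
  | Leaf => 0%N
  | Node l x r =>
      match w with
      | [::] => x
      | false :: w' => nav l w'
      | true :: w' => nav r w'
      end
  end.

Fixpoint lcpb (s u : seq bool) : nat :=
  match s, u with
  | x :: s', y :: u' => if x == y then (lcpb s' u').+1 else 0%N
  | _, _ => 0%N
  end.

Lemma lcpb_size s u : (lcpb s u <= size s)%N /\ (lcpb s u <= size u)%N.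
Proof.
elim: s u => [|x s IH] [|y u] //=; case: eqP => _ //; have [] := IH u; lia.
Qed.

Lemma lcpb_take s u : take (lcpb s u) s = take (lcpb s u) u.
Proof.
elim: s u => [|x s IH] [|y u] //=; case: eqP => [->|_] //=; by rewrite IH.
Qed.

Lemma nav_bp t a : a \in inorder t -> nav t (bp t a) = a.
Proof.
elim: t => [|l IHl x r IHr] //= H.
case: eqP => [e|ne]; first by rewrite ?e.
case: ifP => [Hl|Hl]; first by rewrite IHl.
case: ifP => [Hr|Hr]; first by rewrite IHr.
move: H; rewrite mem_cat in_cons Hl Hr; move/eqP: ne => ne.
by rewrite (negbTE ne).
Qed.

Lemma size_rp t a : a \in inorder t -> size (root_path t a) = (size (bp t a)).+1.
Proof.
elim: t => [|l IHl x r IHr] //= H.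
case: eqP => [e|ne]; first by rewrite ?e.
case: ifP => [Hl|Hl]; first by rewrite /= IHl.
case: ifP => [Hr|Hr]; first by rewrite /= IHr.
move: H; rewrite mem_cat in_cons Hl Hr; move/eqP: ne => ne.
by rewrite (negbTE ne).
Qed.

Lemma rp_head t a : a \in inorder t ->
  exists l x r rest, t = Node l x r /\ root_path t a = x :: rest /\ x \in inorder t.
Proof.
case: t => [|l x r] //= H.
exists l, x, r.
rewrite mem_cat in_cons eqxx orbT.
case: eqP => [_|ne]; first by exists [::].
case: ifP => [Hl|Hl]; first by eexists.
case: ifP => [Hr|Hr]; first by eexists.
move: H; rewrite mem_cat in_cons Hl Hr; move/eqP: ne => ne.
by rewrite (negbTE ne).
Qed.

Lemma lcp1l x u : (lcp [:: x] u <= 1)%N.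
Proof. by case: u => [|y u] //=; case: eqP. Qed.
Lemma lcp1r x u : (lcp u [:: x] <= 1)%N.
Proof. by case: u => [|y u] //=; case: eqP => //; case: u. Qed.
Lemma lcpb0r u : lcpb u [::] = 0%N.
Proof. by case: u. Qed.

Lemma lcp_le t a b : uniq (inorder t) -> a \in inorder t -> b \in inorder t ->
  (lcp (root_path t a) (root_path t b) <= (lcpb (bp t a) (bp t b)).+1)%N.
Proof.
elim: t a b => [|l IHl x r IHr] a b //= U Ha Hb.
move: U; rewrite cat_uniq /= => /and3P [Ul H1 /andP [xr Ur]].
have Hdis : forall z, z \in inorder l -> z \in inorder r -> False.
  move=> z zl zr. move/negP: H1; apply; apply/orP; right; apply/hasP; by exists z.
have xl : x \notin inorder l.
  by apply/negP => xl; move/negP: H1; apply; rewrite xl.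
case: (a =P x) => [ea|nea]; first by apply: leq_trans (lcp1l _ _) _.
case: (b =P x) => [eb|neb]; first by rewrite lcpb0r; apply: lcp1r.
move: Ha Hb; rewrite !mem_cat !in_cons.
move/eqP: nea => nea; move/eqP: neb => neb; rewrite (negbTE nea) (negbTE neb) /=.
case Hal: (a \in inorder l); case Har: (a \in inorder r) => //= _;
case Hbl: (b \in inorder l); case Hbr: (b \in inorder r) => //= _; rewrite eqxx /=.
all: try (by exfalso; apply: (Hdis a)).
all: try (by exfalso; apply: (Hdis b)).
- have := IHl a b Ul Hal Hbl; lia.
- have [l1 [x1 [r1 [rest1 [E1 [P1 M1]]]]]] := rp_head Hal.
  have [l2 [x2 [r2 [rest2 [E2 [P2 M2]]]]]] := rp_head Hbr.
  rewrite P1 P2 /=. case: eqP => [e|_]; last lia.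
  by exfalso; apply: (Hdis x1) => //; rewrite e.
- have [l1 [x1 [r1 [rest1 [E1 [P1 M1]]]]]] := rp_head Har.
  have [l2 [x2 [r2 [rest2 [E2 [P2 M2]]]]]] := rp_head Hbl.
  rewrite P1 P2 /=. case: eqP => [e|_]; last lia.
  by exfalso; apply: (Hdis x2) => //; rewrite -e.
- have := IHr a b Ur Har Hbr; lia.
Qed.

Fixpoint bstrs (e : nat) : seq (seq bool) :=
  match e with
  | 0 => [::]
  | e'.+1 => [::] :: allpairs (fun b w => b :: w) [:: false; true] (bstrs e')
  end.

Lemma size_bstrs e : (size (bstrs e) < expn 2 e)%N.
Proof.
elim: e => [|e IH] //=. rewrite !size_cat !size_map /= expnS. lia.
Qed.

Lemma mem_bstrs e w : (size w < e)%N -> w \in bstrs e.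
Proof.
elim: e w => [|e IH] [|b w] //= H.
have Hw : w \in bstrs e by apply: IH.
by case: b; rewrite in_cons !mem_cat (map_f _ Hw) ?orbT.
Qed.

Definition cand t x e :=
  allpairs (fun c w => nav t (take c (bp t x) ++ w)) (iota (size (bp t x) + 1 - e) e) (bstrs e).

Lemma ball_bound t x e : uniq (inorder t) -> x \in inorder t ->
  (count (fun y => tdist t x y < e) (inorder t) <= e * expn 2 e)%N.
Proof.
move=> U Hx.
rewrite -size_filter.
apply: (@leq_trans (size (cand t x e))); last first.
  by rewrite size_allpairs size_iota leq_mul2l ltnW ?size_bstrs ?orbT.
apply: uniq_leq_size; first by apply: filter_uniq.
move=> y; rewrite mem_filter => /andP [Hd Hy].
have := lcp_le U Hx Hy.
have := lcpb_size (bp t x) (bp t y).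
have := lcpb_take (bp t x) (bp t y).
move: Hd; rewrite /tdist /Defs.dist (size_rp Hx) (size_rp Hy).
set c := lcpb _ _ => Hd Ht [Hc1 Hc2] Hl; clearbody c.
move: Hd Hl; set L := lcp _ _ => Hd Hl; clearbody L.
apply/allpairsP; exists (c, drop c (bp t y)) => /=; split.
- rewrite mem_iota; apply/andP; split; [lia|].
  lia.
- have Hb : (size (bp t y) - c < e)%N by lia.
  by apply: mem_bstrs; rewrite size_drop.
- by rewrite Ht cat_take_drop nav_bp.
Qed.

Fixpoint lastuse (f : nat -> nat) (i t : nat) : option nat :=
  match t with
  | 0 => None
  | t'.+1 => if f t' == i then Some t' else lastuse f i t'
  end.

Lemma finger_pos_lastuse S f l i t :
  finger_pos S f l i t = match lastuse f i t with Some v => nth 0 S v | None => l i end.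
Proof. elim: t => [|t IH] //=; by case: ifP. Qed.

Lemma lastuse_spec f i t v : lastuse f i t = Some v -> (v < t)%N /\ f v = i.
Proof.
elim: t => [|t IH] //=; case: ifP => [/eqP H [<-]|_ /IH [H1 H2]]; split => //; lia.
Qed.

Lemma lastuse_ge f i t w : (w < t)%N -> f w = i -> exists v, lastuse f i t = Some v /\ (w <= v)%N.
Proof.
elim: t => [|t IH] //= Hw Hf; case: ifP => [_|/eqP H]; first by exists t; split => //; lia.
have Hw' : (w < t)%N.
  move: Hw; rewrite ltnS leq_eqVlt => /orP [/eqP E|//]; by subst w; rewrite Hf in H.
exact: IH.
Qed.

Lemma count_split3 (T : Type) (p q r : pred T) s :
  (forall x, p x -> q x || r x) -> (count p s <= count q s + count r s)%N.
Proof.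
move=> H; elim: s => [|x s IH] //=.
case Px: (p x); last by lia.
have := H x Px; case: (q x); case: (r x) => //= _; lia.
Qed.

Definition cheap t S f l e u := (tdist t (nth 0%N S u) (finger_pos S f l (f u) u) < e)%N.
Definition closep t (key : nat -> nat) e (p : nat * nat) :=
  (p.1 < p.2)%N && (tdist t (key p.2) (key p.1) < e)%N.
Definition pairsL L := allpairs pair (iota 0 L) (iota 0 L).

Lemma pass_bound t S f l k e a L key :
  (forall o, (o < L)%N -> nth 0%N S (a + o) = key o) ->
  (forall u, (a <= u < a + L)%N -> (f u < k)%N) ->
  (count (cheap t S f l e) (iota a L) <= k + count (closep t key e) (pairsL L))%N.
Proof.
move=> Hkey Hf.
pose fresh u := match lastuse f (f u) u with Some v => (v < a)%N | None => true end.
apply: leq_trans (count_split3 (q := fresh) (r := predI (cheap t S f l e) (predC fresh)) _ _) _.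
  by move=> u Hu /=; rewrite Hu; case: (fresh u).
apply: leq_add.
  rewrite -size_filter.
  have Hinj : {in filter fresh (iota a L) &, injective f}.
    move=> u u'; rewrite !mem_filter !mem_iota => /andP [Fu Ru] /andP [Fu' Ru'] E.
    case: (ltngtP u u') => // H.
    - have [v [Hv Hle]] := lastuse_ge H E.
      by move: Fu'; rewrite /fresh Hv; lia.
    - have [v [Hv Hle]] := lastuse_ge H (esym E).
      by move: Fu; rewrite /fresh Hv; lia.
  rewrite -(size_map f); apply: (@leq_trans (size (iota 0 k))); last by rewrite size_iota.
  apply: uniq_leq_size; first by rewrite (map_inj_in_uniq Hinj) filter_uniq ?iota_uniq.
  move=> z /mapP [u]; rewrite mem_filter mem_iota => /andP [_ Ru] ->.
  by rewrite mem_iota /= add0n; apply: Hf.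
rewrite -!size_filter.
pose phi u := ((match lastuse f (f u) u with Some v => v | None => 0 end) - a, u - a)%N.
have Hinj : {in filter (predI (cheap t S f l e) (predC fresh)) (iota a L) &, injective phi}.
  move=> u u'; rewrite !mem_filter !mem_iota => /andP [_ /andP [Ru _]] /andP [_ /andP [Ru' _]] [_ E]; lia.
rewrite -(size_map phi).
apply: uniq_leq_size; first by rewrite (map_inj_in_uniq Hinj) filter_uniq ?iota_uniq.
move=> z /mapP [u]; rewrite mem_filter mem_iota => /andP [/andP [Ch NF] Ru] ->.
move: NF; rewrite /= /fresh; case Hl: (lastuse f (f u) u) => [v|] //=; rewrite -leqNgt => Hva; move/andP: Ru => [Ru1 Ru2].
have [Hvu Hfv] := lastuse_spec Hl.
rewrite /phi Hl mem_filter; apply/andP; split.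
  rewrite /closep /=; apply/andP; split; first lia.
  move: Ch; rewrite /cheap finger_pos_lastuse Hl.
  have -> : u = (a + (u - a))%N by lia.
  rewrite Hkey; last lia.
  have -> : v = (a + (v - a))%N by lia.
  rewrite Hkey; last lia.
  by rewrite !addKn.
apply/allpairsP; exists (v - a, u - a)%N => /=; rewrite !mem_iota; split => //;
  apply/andP; split; lia.
Qed.

Lemma sum_const_seq (T : Type) (s : seq T) c : (\sum_(i <- s) c = size s * c)%N.
Proof. elim: s => [|x s IH]; by rewrite ?big_nil ?big_cons ?IH //= mulSn. Qed.

Lemma sum_bool (T : Type) (s : seq T) (b : pred T) : (\sum_(x <- s) (b x : nat) = count b s)%N.
Proof. elim: s => [|x s IH]; by rewrite ?big_nil ?big_cons ?IH. Qed.

Lemma sum_iotaS b (F : nat -> nat) : (\sum_(i <- iota 0 b.+1) F i = \sum_(i <- iota 0 b) F i + F b)%N.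
Proof. by rewrite -addn1 iotaD big_cat big_seq1. Qed.

Lemma count_blocks (p : pred nat) a b c (F : nat -> nat) :
  (forall i, (i < b)%N -> (count p (iota (a + i * c) c) <= F i)%N) ->
  (count p (iota a (b * c)) <= \sum_(i <- iota 0 b) F i)%N.
Proof.
elim: b => [|b IH] H; first by rewrite mul0n big_nil.
rewrite sum_iotaS mulSnr iotaD count_cat leq_add //.
  by apply: IH => i Hi; apply: H; lia.
by apply: H.
Qed.

Lemma count_allpairs (p : pred (nat * nat)) s t :
  count p (allpairs pair s t) = (\sum_(x <- s) count (fun y => p (x, y)) t)%N.
Proof. elim: s => [|x s IH]; by rewrite ?big_nil ?big_cons //= count_cat count_map IH. Qed.

Lemma sum_count_exchange (Q : nat -> pred (nat * nat)) (s : seq (nat * nat)) N :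
  (\sum_(b <- iota 0 N) count (Q b) s = \sum_(p <- s) count (fun b => Q b p) (iota 0 N))%N.
Proof.
elim: s => [|x s IH]; first by rewrite big_nil big1_seq.
by rewrite big_cons /= big_split /= IH sum_bool.
Qed.

Definition keyf h b o := ((b %% h).+1 + (b %/ h).+1 * o)%N.
Definition gf h r L j := keyf h (j %/ L %/ r) (j %% L).
Definition Sq A h r L := mkseq (gf h r L) (A * h * (r * L)).

Lemma gf_eq h r L q o : (0 < L)%N -> (o < L)%N -> gf h r L (q * L + o) = keyf h (q %/ r) o.
Proof.
move=> HL Ho; rewrite /gf divnMDl // modnMDl (divn_small Ho) (modn_small Ho) addn0 //.
Qed.

Lemma keyf_inj h i j b b' : (0 < h)%N -> (i < j)%N ->
  keyf h b j = keyf h b' j -> keyf h b i = keyf h b' i -> b = b'.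
Proof.
rewrite /keyf => Hh Hij E1 E2.
have Hy : (b %/ h).+1 = (b' %/ h).+1.
  have E : ((b %/ h).+1 * (j - i) = (b' %/ h).+1 * (j - i))%N.
    rewrite !mulnBr; lia.
  have Hji : (0 < j - i)%N by rewrite subn_gt0.
  by apply/eqP; rewrite -(eqn_pmul2r Hji) E.
have Hx : (b %% h) = (b' %% h) by move: E1; rewrite Hy; lia.
by rewrite (divn_eq b h) (divn_eq b' h); case: Hy => ->; rewrite Hx.
Qed.

Lemma keyf_range n A h L b o : (0 < h)%N -> (b < A * h)%N -> (o < L)%N -> (h + A * L <= n)%N ->
  in_range n (keyf h b o).
Proof.
move=> Hh Hb Ho Hn; rewrite /in_range /keyf; apply/andP; split; first by rewrite addSn.
have H1 : (b %% h < h)%N by rewrite ltn_pmod.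
have H2 : ((b %/ h).+1 <= A)%N by rewrite ltn_divLR.
have H3 : ((b %/ h).+1 * o <= A * L)%N by apply: leq_mul => //; lia.
lia.
Qed.

Lemma size_Sq A h r L : size (Sq A h r L) = (A * h * (r * L))%N.
Proof. by rewrite size_mkseq. Qed.

Lemma nth_Sq A h r L j : (j < A * h * (r * L))%N -> nth 0%N (Sq A h r L) j = gf h r L j.
Proof. by move=> Hj; rewrite nth_mkseq. Qed.

Lemma P_bound n t e : bst_on n t ->
  (count (fun q : nat * nat => tdist t q.1 q.2 < e)%N (allpairs pair (iota 1 n) (iota 1 n))
     <= n * (e * expn 2 e))%N.
Proof.
move=> Hb; rewrite count_allpairs.
have U : uniq (inorder t) by rewrite Hb iota_uniq.
suff H : forall s, {subset s <= iota 1 n} ->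
  (\sum_(x <- s) count (fun y => tdist t x y < e)%N (iota 1 n) <= size s * (e * expn 2 e))%N.
  by have := H (iota 1 n) (fun x h => h); rewrite size_iota.
elim=> [|x s IH] Hs; first by rewrite big_nil.
rewrite big_cons mulSn leq_add //.
  have Hx : x \in inorder t by rewrite Hb; apply: Hs; rewrite in_cons eqxx.
  by have := ball_bound e U Hx; rewrite Hb.
by apply: IH => y Hy; apply: Hs; rewrite in_cons Hy orbT.
Qed.

Lemma close_bound n t e A h L p : bst_on n t -> (0 < h)%N -> (h + A * L <= n)%N ->
  p \in pairsL L ->
  (count (fun b => closep t (keyf h b) e p) (iota 0 (A * h)) <=
   count (fun q : nat * nat => tdist t q.1 q.2 < e)%N (allpairs pair (iota 1 n) (iota 1 n)))%N.
Proof.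
move=> Hb Hh Hn; case: p => i j Hp.
case Hij: (i < j)%N; last first.
  by rewrite (@eq_count _ _ pred0) ?count_pred0 // => b; rewrite /closep /= Hij.
move: Hp => /allpairsP [[i0 j0] [/= Hi Hj [Ei Ej]]]; subst i0 j0.
move: Hi Hj; rewrite !mem_iota /= !add0n => Hi Hj.
rewrite -!size_filter.
pose phi b := (keyf h b j, keyf h b i).
have Hinj : {in filter (fun b => closep t (keyf h b) e (i, j)) (iota 0 (A * h)) &, injective phi}.
  move=> b b0 _ _ E; apply: (keyf_inj Hh Hij); [exact: (f_equal fst E) | exact: (f_equal snd E)].
rewrite -(size_map phi); apply: uniq_leq_size.
  by rewrite (map_inj_in_uniq Hinj) filter_uniq ?iota_uniq.
move=> z /mapP [b]; rewrite mem_filter mem_iota add0n => /andP [Hc /andP [_ Hbn]] ->.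
rewrite mem_filter; apply/andP; split.
  by move: Hc; rewrite /closep /= => /andP [].
have R1 := keyf_range Hh Hbn Hj Hn.
have R2 := keyf_range Hh Hbn Hi Hn.
move: R1 R2; rewrite /in_range => R1 R2.
move/andP: R1 => [R1 R1']; move/andP: R2 => [R2 R2'].
apply/allpairsP; exists (keyf h b j, keyf h b i) => /=; rewrite !mem_iota; split => //;
  apply/andP; split; lia.
Qed.

Lemma cheap_total n k e A h r t f l :
  (0 < k)%N -> (0 < h)%N -> (0 < r)%N -> (h + A * (2 * k) <= n)%N ->
  bst_on n t -> valid_strategy n k (Sq A h r (2 * k)) f l ->
  (count (cheap t (Sq A h r (2 * k)) f l e) (iota 0 (A * h * (r * (2 * k))))
    <= r * (A * h * k) + r * ((2 * k) * (2 * k) * (n * (e * expn 2 e))))%N.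
Proof.
move=> Hk Hh Hr Hn Hb [_ Hf].
set L := (2 * k)%N; set S := Sq A h r L; set N := (A * h)%N.
have HL : (0 < L)%N by rewrite /L; lia.
pose cl b := count (closep t (keyf h b) e) (pairsL L).
apply: (@leq_trans (\sum_(b <- iota 0 N) \sum_(rho <- iota 0 r) (k + cl b))).
  rewrite -[iota 0 _]/(iota 0 (N * (r * L))).
  apply: count_blocks => b Hbn; rewrite add0n.
  apply: count_blocks => rho Hrho.
  apply: (@pass_bound t S f l k e _ L (keyf h b)).
  - move=> o Ho.
    have E : (b * (r * L) + rho * L + o = (b * r + rho) * L + o)%N.
      by rewrite mulnDl mulnA.
    rewrite E nth_Sq; last first.
      have : (b * r + rho < N * r)%N.
        have : (b.+1 * r <= N * r)%N by rewrite leq_mul2r Hbn orbT.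
        rewrite mulSn; lia.
      move=> H1.
      have : ((b * r + rho).+1 * L <= N * r * L)%N by rewrite leq_mul2r H1 orbT.
      rewrite mulSn mulnA; lia.
    by rewrite gf_eq // divnMDl // (divn_small Hrho) addn0.
  - move=> u Hu; apply: Hf; rewrite size_Sq.
    have : (b * r + rho < N * r)%N.
      have : (b.+1 * r <= N * r)%N by rewrite leq_mul2r Hbn orbT.
      rewrite mulSn; lia.
    move=> H1.
    have : ((b * r + rho).+1 * L <= N * r * L)%N by rewrite leq_mul2r H1 orbT.
    rewrite mulSn mulnA mulnDl -mulnA; lia.
under eq_bigr do rewrite sum_const_seq size_iota.
rewrite -big_distrr /= big_split /= sum_const_seq size_iota -mulnDr leq_mul2l; apply/orP; right.
rewrite leq_add2l.
rewrite /cl sum_count_exchange.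
apply: (@leq_trans (\sum_(p <- pairsL L)
   count (fun q : nat * nat => tdist t q.1 q.2 < e)%N (allpairs pair (iota 1 n) (iota 1 n)))).
  rewrite big_seq_cond [X in (_ <= X)%N]big_seq_cond; apply: leq_sum => p /andP [Hp _].
  exact: (close_bound e Hb Hh Hn Hp).
rewrite sum_const_seq /pairsL size_allpairs size_iota leq_mul2l; apply/orP; right.
exact: P_bound.
Qed.

Lemma cost_bound n k e A h r t f l :
  (0 < k)%N -> (0 < h)%N -> (0 < r)%N -> (h + A * (2 * k) <= n)%N ->
  (8 * k * (n * (e * expn 2 e)) <= A * h)%N ->
  bst_on n t -> valid_strategy n k (Sq A h r (2 * k)) f l ->
  ((e + 1) * size (Sq A h r (2 * k)) <= 4 * finger_cost t (Sq A h r (2 * k)) f l)%N.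
Proof.
move=> Hk Hh Hr Hn Hc Hb Hv.
have Hch := cheap_total e Hk Hh Hr Hn Hb Hv.
set S := Sq A h r (2 * k) in Hch Hv *.
rewrite /finger_cost /index_iota subn0 size_Sq.
set m := (A * h * (r * (2 * k)))%N in Hch *.
have H1 : ((e + 1) * count (predC (cheap t S f l e)) (iota 0 m) <=
    \sum_(u <- iota 0 m) (1 + tdist t (nth 0%N S u) (finger_pos S f l (f u) u)))%N.
  rewrite -sum_bool big_distrr /=; apply: leq_sum => u _.
  rewrite /cheap; case: ltnP => H /=; lia.
have H2 := count_predC (cheap t S f l e) (iota 0 m).
rewrite size_iota in H2.
set c := count _ _ in Hch H2.
set X := (n * (e * expn 2 e))%N in Hch Hc.
have H3 : (4 * c <= 3 * m)%N.
  have H4 : (2 * k * (8 * k * X) <= 2 * k * (A * h))%N by rewrite leq_mul2l Hc orbT.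
  rewrite /m; nia.
apply: leq_trans (_ : (4 * ((e + 1) * count (predC (cheap t S f l e)) (iota 0 m)) <= _)%N); last first.
  by rewrite leq_mul2l H1 orbT.
nia.
Qed.

Lemma ws_window_n n S j : all (in_range n) S -> (size (ws_window S j) <= n)%N.
Proof.
move=> Ha; rewrite /ws_window.
rewrite -(size_iota 1 n); apply: uniq_leq_size; first exact: undup_uniq.
move=> x; rewrite mem_undup => /mem_drop /mem_take Hx.
move/allP: Ha => /(_ x Hx); rewrite /in_range mem_iota => /andP [H1 H2].
apply/andP; split => //; lia.
Qed.

Lemma ws_window_L S j L : (0 < L)%N -> (L <= j)%N -> (j < size S)%N ->
  nth 0%N S (j - L) = nth 0%N S j -> (size (ws_window S j) <= L)%N.
Proof.
move=> HL HLj Hj E.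
rewrite /ws_window /ws_start.
set pre := take j S; set x := nth 0%N S j.
have Hsp : size pre = j by rewrite size_take Hj.
have Hxp : nth 0%N pre (j - L) = x by rewrite nth_take ?E //; lia.
have Hin : x \in pre by rewrite -Hxp mem_nth // Hsp; lia.
rewrite Hin.
have Hidx : (index x (rev pre) <= L - 1)%N.
  have : nth 0%N (rev pre) (L - 1) = x by rewrite nth_rev Hsp -?Hxp; [congr nth; lia | lia].
  move=> <-; apply: index_nth; rewrite size_rev Hsp; lia.
apply: leq_trans (size_undup _) _.
rewrite size_drop size_take Hsp; case: ifP => H; lia.
Qed.

Lemma Sq_repeat A h r L j : (0 < L)%N -> (0 < r)%N -> (j < A * h * (r * L))%N ->
  (j %/ L %% r != 0)%N ->
  (L <= j)%N /\ nth 0%N (Sq A h r L) (j - L) = nth 0%N (Sq A h r L) j.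
Proof.
move=> HL Hr Hj Hq.
set q := (j %/ L)%N in Hq.
have Ej : j = (q * L + j %% L)%N by rewrite /q -divn_eq.
have Hq1 : (0 < q)%N by move: Hq; case: (q) => //; rewrite mod0n.
have HLj : (L <= j)%N by rewrite Ej; have := leq_mul Hq1 (leqnn L); lia.
split => //.
have Ho : (j %% L < L)%N by rewrite ltn_mod.
have Ej' : (j - L = (q - 1) * L + j %% L)%N.
  rewrite mulnBl mul1n {1}Ej; have := leq_mul Hq1 (leqnn L); lia.
rewrite !nth_Sq; [|lia|lia].
rewrite Ej' {2}Ej !gf_eq //.
have Eq : (q = q %/ r * r + q %% r)%N by rewrite -divn_eq.
have Hm : (0 < q %% r)%N by rewrite lt0n.
have Hm' : (q %% r - 1 < r)%N by have := ltn_mod q r; rewrite Hr; lia.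
have -> : (q - 1 = q %/ r * r + (q %% r - 1))%N by lia.
by rewrite divnMDl // (divn_small Hm') addn0.
Qed.

Lemma count_first N r L : (0 < L)%N -> (0 < r)%N ->
  (count (fun j => j %/ L %% r == 0)%N (iota 0 (N * (r * L))) <= N * L)%N.
Proof.
move=> HL Hr.
apply: (@leq_trans (\sum_(i <- iota 0 N) \sum_(rho <- iota 0 r) ((rho == 0%N) * L)%N)).
  apply: count_blocks => i Hi; rewrite add0n.
  apply: count_blocks => rho Hrho.
  case: eqP => [E|Hne]; first by rewrite mul1n; apply: leq_trans (count_size _ _) _; rewrite size_iota.
  rewrite mul0n leqn0 (@eq_in_count _ _ pred0) ?count_pred0 //.
  move=> u; rewrite mem_iota => /andP [H1 H2] /=; apply/eqP => Hu; apply: Hne.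
  have Eu : (u = (i * r + rho) * L + (u - (i * (r * L) + rho * L)))%N.
    by rewrite mulnDl -mulnA; lia.
  have Ho : (u - (i * (r * L) + rho * L) < L)%N by lia.
  by move: Hu; rewrite Eu divnMDl // (divn_small Ho) addn0 modnMDl modn_small.
apply: (@leq_trans (\sum_(i <- iota 0 N) L)); last by rewrite sum_const_seq size_iota.
apply: leq_sum => i _.
rewrite -big_distrl /=.
have -> : (\sum_(rho <- iota 0 r) (rho == 0%N) = count (pred1 0%N) (iota 0 r))%N.
  by rewrite -sum_bool.
rewrite count_uniq_mem ?iota_uniq //; case: (_ \in _) => /=; lia.
Qed.

Open Scope R_scope.

Lemma foldr_map_le (s : seq nat) (F G : nat -> R) :
  (forall j, j \in s -> F j <= G j) ->
  foldr Rplus 0 (map F s) <= foldr Rplus 0 (map G s).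
Proof.
elim: s => [|x s IH] H /=; first lra.
have := H x (mem_head _ _).
have := IH (fun j Hj => H j (@mem_behead _ (x :: s) _ Hj)); lra.
Qed.

Lemma foldr_split (s : seq nat) (p : pred nat) c d :
  foldr Rplus 0 (map (fun j => c + (if p j then d else 0)) s) =
  INR (size s) * c + INR (count p s) * d.
Proof.
elim: s => [|x s IH]; first by rewrite /=; lra.
rewrite [size _]/= [count _ _]/= S_INR [map _ _]/= [foldr _ _ _]/= IH; case: (p x); rewrite ?add1n ?add0n ?S_INR; lra.


Qed.

Lemma log2_pos_le x y : 0 < x -> x <= y -> log2 x <= log2 y.
Proof.
move=> Hx Hxy; rewrite /log2 /Rdiv.
have Hl2 : 0 < / ln 2 by apply: Rinv_0_lt_compat; have := ln_lt_2; lra.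
apply: Rmult_le_compat_r; first lra.
case: (Rle_lt_or_eq_dec _ _ Hxy) => [H|->]; last lra.
by apply: Rlt_le; apply: ln_increasing.
Qed.

Lemma INR_leq (a b : nat) : (a <= b)%nat -> INR a <= INR b.
Proof. by move/leP; apply: le_INR. Qed.

Lemma INR_ltq (a b : nat) : (a < b)%nat -> INR a < INR b.
Proof. by move/ltP; apply: lt_INR. Qed.

Lemma log2_le_nat (w B : nat) : (w <= B)%nat -> (1 <= B)%nat -> log2 (INR w) <= log2 (INR B).
Proof.
case: w => [|w] H1 H2.
  have L0 : ln 0 = 0 by rewrite /ln; case: Rlt_dec => [H|H] //; case: (Rlt_irrefl 0).
  rewrite /log2 /= L0.
  have HB : 1 <= INR B by apply: (INR_leq H2).
  have := ln_increasing 1 (INR B).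
  have := ln_lt_2; rewrite ln_1 /Rdiv => Hl2 Hinc.
  rewrite Rmult_0_l; apply: Rmult_le_pos.
    case: (Rle_lt_or_eq_dec _ _ HB) => [H|<-]; last by rewrite ln_1; lra.
    have := Hinc Rlt_0_1 H; lra.
  apply: Rlt_le; apply: Rinv_0_lt_compat; lra.
apply: log2_pos_le; first by apply: (INR_ltq (ltn0Sn w)).
exact: INR_leq.
Qed.

Lemma pow2_ge n : INR n <= 2 ^ n.
Proof.
elim: n => [|n IH]; first by rewrite /=; lra.
rewrite S_INR /=; have : 1 <= 2 ^ n by apply: pow_R1_Rle; lra.
lra.
Qed.

Lemma log2_le_self n : (1 <= n)%nat -> log2 (INR n) <= INR n.
Proof.
move=> Hn.
have Hpos : 0 < INR n by apply: (INR_ltq Hn).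
have := ln_lt_2 => Hl2.
have H : ln (INR n) <= INR n * ln 2.
  rewrite -ln_pow; last lra.
  case: (Rle_lt_or_eq_dec _ _ (pow2_ge n)) => [H|<-]; last lra.
  by apply: Rlt_le; apply: ln_increasing.
rewrite /log2 /Rdiv; apply: (Rmult_le_reg_r (ln 2)); first lra.
rewrite Rmult_assoc Rinv_l; lra.
Qed.

Lemma INR_muln a b : INR (a * b)%nat = INR a * INR b.
Proof. by rewrite -mult_INR. Qed.

Lemma log2_1 : log2 1 = 0.
Proof. by rewrite /log2 ln_1 /Rdiv Rmult_0_l. Qed.

Lemma log2_nat_ge0 B : (1 <= B)%nat -> 0 <= log2 (INR B).
Proof. move=> H; have := log2_le_nat (leq_trans (leqnn 1) H) H; by rewrite /= log2_1. Qed.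

Lemma Sq_in_range n A h r L : (0 < h)%nat -> (0 < L)%nat -> (0 < r)%nat -> (h + A * L <= n)%nat ->
  all (in_range n) (Sq A h r L).
Proof.
move=> Hh HL Hr Hn; apply/allP => x /(nthP 0%nat) [j]; rewrite size_Sq => Hj <-.
rewrite nth_Sq // /gf; apply: (keyf_range Hh _ _ Hn); last by rewrite ltn_mod.
rewrite !ltn_divLR //; by rewrite mulnA in Hj.
Qed.

Lemma WS_bound n k A h : (0 < k)%nat -> (0 < h)%nat -> (0 < n)%nat -> (h + A * (2 * k) <= n)%nat ->
  WS (Sq A h n (2 * k)) <= INR (size (Sq A h n (2 * k))) * (log2 (INR (2 * k)) + 1).
Proof.
move=> Hk Hh Hn HAn.
set L := (2 * k)%nat; set S := Sq A h n L.
have HL : (0 < L)%nat by rewrite /L; lia.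
have Hall : all (in_range n) S by apply: Sq_in_range.
pose first j := (j %/ L %% n == 0)%nat.
rewrite /WS.
apply: Rle_trans (foldr_map_le (G := fun j => log2 (INR L) + (if first j then log2 (INR n) else 0)) _) _.
  move=> j; rewrite mem_iota add0n => /andP [_ Hj].
  rewrite /first; case: ifP => Hf.
    have := log2_nat_ge0 HL; have := log2_le_nat (ws_window_n j Hall) Hn; lra.
  move: Hj; rewrite size_Sq => Hj.
  have [HLj E] := Sq_repeat HL Hn Hj (negbT Hf).
  have Hj2 : (j < size S)%nat by rewrite size_Sq.
  have := ws_window_L HL HLj Hj2 E.
  move=> Hw; have := log2_le_nat Hw HL; lra.
rewrite foldr_split size_iota.
have Hc := count_first (A * h) HL Hn.
rewrite size_Sq in Hc *.
have Hlog := log2_le_self Hn.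
have Hlog0 := log2_nat_ge0 Hn.
have Hc' : INR (count first (iota 0 (A * h * (n * L)))) <= INR (A * h * L) by apply: INR_leq.
have Hm : INR (A * h * (n * L)) = INR (A * h * L) * INR n.
  by rewrite -INR_muln; congr INR; lia.
rewrite Hm.
have : INR (count first (iota 0 (A * h * (n * L)))) * log2 (INR n) <= INR (A * h * L) * INR n.
  apply: Rmult_le_compat => //; exact: pos_INR.
lra.
Qed.

Lemma e_exp_le e : (e * expn 2 e <= expn 4 e)%nat.
Proof.
have H : (e < expn 2 e)%nat by apply: ltn_expl.
have -> : expn 4 e = (expn 2 e * expn 2 e)%nat by rewrite -expnMn.
by rewrite leq_mul2r ltnW ?orbT.
Qed.

Lemma nat_params n k : (2 <= k)%nat -> (4 * k <= n)%nat ->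
  let A := (n %/ (4 * k))%nat in let h := (n %/ 2)%nat in
  let e := trunc_log 4 ((A * h) %/ (8 * k * n)) in
  [/\ (0 < A)%nat, (0 < h)%nat, (h + A * (2 * k) <= n)%nat,
      (8 * k * (n * (e * expn 2 e)) <= A * h)%nat &
      (n < 256 * (k * k) * expn 4 e.+1)%nat].
Proof.
move=> Hk Hn A h e.
have H4k : (0 < 4 * k)%nat by lia.
have HA : (0 < A)%nat by rewrite /A divn_gt0.
have Hh : (0 < h)%nat by rewrite /h divn_gt0 //; lia.
have HA1 := leq_divM n (4 * k); rewrite -/A in HA1.
have Hh1 := leq_divM n 2; rewrite -/h in Hh1.
have HA2 := ltn_ceil n H4k; rewrite -/A in HA2.
have Hh2 := @ltn_ceil n 2 isT; rewrite -/h in Hh2.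
set Q := ((A * h) %/ (8 * k * n))%nat in e *.
have H8 : (0 < 8 * k * n)%nat by lia.
have HQ1 := leq_divM (A * h) (8 * k * n); rewrite -/Q in HQ1.
have HQ2 := ltn_ceil (A * h) H8; rewrite -/Q in HQ2.
have HQ3 := trunc_log_ltn Q (isT : (1 < 4)%nat); rewrite -/e in HQ3.
split => //.
- nia.
- case: (posnP Q) => HQ0.
    by rewrite /e HQ0 trunc_log0 mul0n !muln0.
  have HQ4 := trunc_logP (isT : (1 < 4)%nat) HQ0; rewrite -/e in HQ4.
  have := e_exp_le e.
  set X := (e * expn 2 e)%nat; set Y := expn 4 e.
  move=> HXY.
  have HXQ : (X <= Q)%nat by lia.
  have : (8 * k * (n * X) <= 8 * k * n * Q)%nat.
    rewrite -[(8 * k * n * Q)%nat]mulnA; apply: leq_mul => //; exact: leq_mul.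
  nia.
- set Z := expn 4 e.+1 in HQ3 *.
  have Hnn : (n * n < 32 * k * (A * h))%nat by nia.
  have : (n * n < 256 * (k * k) * Z * n)%nat by nia.
  nia.
Qed.

Lemma ln_le' x y : 0 < x -> x <= y -> ln x <= ln y.
Proof.
move=> Hx Hxy; case: (Rle_lt_or_eq_dec _ _ Hxy) => [H|->]; last lra.
by apply: Rlt_le; apply: ln_increasing.
Qed.

Lemma INR_expn a m : INR (expn a m) = INR a ^ m.
Proof. elim: m => [|m IH]; first by rewrite expn0. by rewrite expnS INR_muln IH. Qed.

Lemma lnk_bound eps C n k : 0 < C -> (1 <= k)%nat -> (1 <= n)%nat ->
  INR k <= C * Rpower (INR n) (1/2 - eps) -> ln (INR k) <= ln C + (1/2 - eps) * ln (INR n).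
Proof.
move=> HC Hk Hn H.
have Hk0 : 0 < INR k by apply: (INR_ltq Hk).
rewrite -[(1/2 - eps) * ln (INR n)]ln_exp -ln_mult; [|lra|apply: exp_pos].
apply: ln_le' => //.
Qed.

Lemma R1 eps C n k : 0 < eps -> 0 < C -> (1 <= k)%nat -> (1 <= n)%nat ->
  INR k <= C * Rpower (INR n) (1/2 - eps) ->
  2 * (ln 4 + ln C) <= ln (INR n) -> 0 <= ln (INR n) -> (4 * k <= n)%nat.
Proof.
move=> He HC Hk Hn H Hl Hl0.
have Hb := lnk_bound HC Hk Hn H.
have Hk0 : 0 < INR k by apply: (INR_ltq Hk).
have H4 : ln (INR (4 * k)) <= ln (INR n).
  rewrite INR_muln ln_mult; [|simpl; lra|lra].
  have : eps * ln (INR n) >= 0 by apply: Rle_ge; apply: Rmult_le_pos; lra.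
  rewrite [INR 4]/=; replace (1 + 1 + 1 + 1) with 4 by lra. lra.
case: (leqP (4 * k) n) => // Hlt.
have := ln_increasing (INR n) (INR (4 * k)) (INR_ltq Hn) (INR_ltq Hlt); lra.
Qed.

Lemma R2 eps C n k e : 0 < eps -> 0 < C -> (1 <= k)%nat -> (1 <= n)%nat ->
  INR k <= C * Rpower (INR n) (1/2 - eps) ->
  (n < k * k * expn 2 (2 * e + 10))%nat ->
  2 * (4 * ln 2 + ln C) / eps <= ln (INR n) ->
  eps / 2 * log2 (INR n) <= INR (e + 1).
Proof.
move=> He HC Hk Hn H Hb Hl.
have Hk' := lnk_bound HC Hk Hn H.
have Hk0 : 0 < INR k by apply: (INR_ltq Hk).
have Hl2 := ln_lt_2.
have H1 : ln (INR n) < 2 * ln (INR k) + INR (2 * e + 10) * ln 2.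
  have := ln_increasing _ _ (INR_ltq Hn) (INR_ltq Hb).
  rewrite !INR_muln INR_expn ln_mult; [|apply: Rmult_lt_0_compat => //|apply: pow_lt; simpl; lra].
  rewrite ln_mult // ln_pow; last (simpl; lra).
  replace (INR 2) with 2 by (simpl; lra); lra.
have H2 : eps * ln (INR n) / 2 >= 4 * ln 2 + ln C.
  have := Rmult_le_compat_r (eps / 2) _ _ (ltac:(lra) : 0 <= eps / 2) Hl.
  have -> : 2 * (4 * ln 2 + ln C) / eps * (eps / 2) = 4 * ln 2 + ln C by field; lra.
  lra.
have E : INR (2 * e + 10) = 2 * INR (e + 1) + 8.
  rewrite plus_INR mult_INR plus_INR /=; lra.
rewrite E in H1.
have H3 : eps * ln (INR n) / 2 <= INR (e + 1) * ln 2 by nra.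
rewrite /log2 /Rdiv.
apply: (Rmult_le_reg_r (ln 2)); first lra.
have -> : eps * / 2 * (ln (INR n) * / ln 2) * ln 2 = eps * ln (INR n) / 2 by field; lra.
lra.
Qed.

Lemma log2_2k k : (1 <= k)%nat -> log2 (INR (2 * k)) = 1 + log2 (INR k).
Proof.
move=> Hk; have Hk0 : 0 < INR k by apply: (INR_ltq Hk).
have Hl2 := ln_lt_2.
rewrite INR_muln /log2 ln_mult; last lra; last (simpl; lra).
replace (INR 2) with 2 by (simpl; lra); field; lra.
Qed.

Lemma log2_k_ge1 k : (2 <= k)%nat -> 1 <= log2 (INR k).
Proof.
move=> Hk; have := log2_le_nat Hk (ltnW Hk).
have Hl2 := ln_lt_2.
have -> : log2 (INR 2) = 1 by rewrite /log2; replace (INR 2) with 2 by (simpl; lra); field; lra.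
lra.
Qed.

Close Scope R_scope.

Theorem mainTheorem14 (eps C : R) (Heps : (0 < eps)%R) (HC : (0 < C)%R) :
  exists c1 c2 : R, (0 < c1)%R /\ (0 < c2)%R /\
  exists n0 : nat, forall n k : nat,
    (n0 <= n)%N -> (2 <= k)%N ->
    (INR k <= C * Rpower (INR n) (1/2 - eps))%R ->
    exists S : seq nat,
      (0 < size S)%N /\ all (in_range n) S /\
      (WS S <= c1 * INR (size S) * log2 (INR k))%R /\
      LF_ge n k S (c2 * INR (size S) * log2 (INR n / INR k))%R.
Proof.
exists 3%R, (eps / 8)%R; split; first lra; split; first lra.
pose T := Rmax (Rmax (2 * (ln 4 + ln C)) (2 * (4 * ln 2 + ln C) / eps)) 0.
have [n0 Hn0] := INR_archimed 1 (exp T) Rlt_0_1.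
rewrite Rmult_1_r in Hn0.
exists n0 => n k Hn Hk HkC.
have HnR : (INR n0 <= INR n)%R by apply: INR_leq.
have HexpT := exp_pos T.
have Hn1 : (1 <= n)%N.
  case: (posnP n) => [E|//]; rewrite E /= in HnR; lra.
have Hk1 : (1 <= k)%N by lia.
have HlT : (T < ln (INR n))%R.
  rewrite -[T]ln_exp; apply: ln_increasing => //; lra.
have HT1 := Rmax_l (Rmax (2 * (ln 4 + ln C)) (2 * (4 * ln 2 + ln C) / eps)) 0.
have HT2 := Rmax_r (Rmax (2 * (ln 4 + ln C)) (2 * (4 * ln 2 + ln C) / eps)) 0.
have HT3 := Rmax_l (2 * (ln 4 + ln C)) (2 * (4 * ln 2 + ln C) / eps).
have HT4 := Rmax_r (2 * (ln 4 + ln C)) (2 * (4 * ln 2 + ln C) / eps).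
rewrite -/T in HT1 HT2.
have H4k : (4 * k <= n)%N.
  apply: (R1 Heps HC Hk1 Hn1 HkC); lra.
have [HA Hh Hsum Hcond Hbound] := nat_params Hk H4k.
move: HA Hh Hsum Hcond Hbound.
set A := (n %/ (4 * k))%N; set h := (n %/ 2)%N.
set e := trunc_log 4 _ => HA Hh Hsum Hcond Hbound.
have Hk0 : (0 < k)%N by lia.
exists (Sq A h n (2 * k)).
have Hm : (0 < size (Sq A h n (2 * k)))%N.
  rewrite size_Sq !muln_gt0 HA Hh Hn1 /=; lia.
split => //; split; first by apply: Sq_in_range => //; lia.
have HmR : (0 <= INR (size (Sq A h n (2 * k))))%R by apply: pos_INR.
split.
  apply: Rle_trans (WS_bound Hk0 Hh Hn1 Hsum) _.
  rewrite log2_2k //.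
  have := log2_k_ge1 Hk.
  move=> Hl.
  set M := INR (size _) in HmR *.
  have : (0 <= M * (log2 (INR k) - 1))%R by apply: Rmult_le_pos; lra.
  nra.
move=> t f l Hb Hv.
have Hc := cost_bound Hk0 Hh Hn1 Hsum Hcond Hb Hv.
have HcR : (INR (e + 1) * INR (size (Sq A h n (2 * k))) <=
            4 * INR (finger_cost t (Sq A h n (2 * k)) f l))%R.
  have := INR_leq Hc; rewrite !INR_muln; replace (INR 4) with 4%R by (simpl; lra); by [].
have Hb2 : (n < k * k * expn 2 (2 * e + 10))%N.
  have -> : expn 2 (2 * e + 10) = (256 * expn 4 e.+1)%N.
    by rewrite (_ : (2 * e + 10 = 8 + 2 * e.+1)%N) ?expnD ?expnM //; lia.
  move: Hbound; set Z := expn 4 e.+1; nia.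
have HeR := R2 Heps HC Hk1 Hn1 HkC Hb2 (ltac:(lra)).
have Hlk : (log2 (INR n / INR k) <= log2 (INR n))%R.
  have Hn0' : (0 < INR n)%R by apply: (INR_ltq Hn1).
  have Hk0' : (1 <= INR k)%R by apply: (INR_leq Hk1).
  apply: log2_pos_le.
    apply: Rdiv_lt_0_compat; lra.
  rewrite /Rdiv; rewrite -{2}[INR n]Rmult_1_r; apply: Rmult_le_compat_l; first lra.
  rewrite -Rinv_1; apply: Rinv_le_contravar; lra.
set M := INR (size _) in HmR HcR *.
set K := INR (finger_cost _ _ _ _) in HcR *.
have H1 : (eps / 8 * M * log2 (INR n / INR k) <= eps / 8 * M * log2 (INR n))%R.
  apply: Rmult_le_compat_l => //; apply: Rmult_le_pos; lra.
have H2 : (eps / 8 * M * log2 (INR n) <= M * INR (e + 1) / 4)%R.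
  have := Rmult_le_compat_l M _ _ HmR HeR; lra.
lra.
Qed.
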